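(* Let $G=(V,E)$ be an undirected, unweighted, 2-edge-connected graph and let $T$ be a spanning tree of $G$. Then for every edge $e$ of $T$ there exists a set $C\subseteq S_e$ with $|C|\le 6$ such that for every swap edge $f\in S_e$, $C$ contains an edge that is critical for $f$.
   Context: $d_T(u,v)$ denotes the number of edges on the unique path between $u$ and $v$ in the tree $T$. For an edge $e$ of $T$, let $X$ and $Y=V\setminus X$ be the vertex sets of the two connected components of $T-e$. The set $S_e$ of swap edges of $e$ consists of all edges of $E\setminus\{e\}$ with one endpoint in $X$ and the other in $Y$; each swap edge is written $(u,v)$ with $u\in X$, $v\in Y$. For $f=(x,y)\in S_e$, let $T_{e/f}$ be the tree obtained from $T$ by replacing $e$ with $f$; for $g=(a,b)\in S_e$ one has $d_{T_{e/f}}(a,b)=d_T(x,a)+1+d_T(b,y)$. An edge $g=(a,b)\in S_e$ is called critical for $f=(x,y)\in S_e$ if $$d_T(x,a)+1+d_T(b,y)=\max_{(a'',b'')\in S_e}\big(d_T(x,a'')+1+d_T(b'',y)\big),$$ i.e. $g$ attains the maximum stretch of $T_{e/f}$ over the swap edges of $e$. *)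

(* Defs.v *)
From mathcomp Require Import all_boot.
Set Implicit Arguments. Unset Strict Implicit. Unset Printing Implicit Defensive.

(* A simple undirected graph on a finite vertex type V is a symmetric,
   irreflexive relation g : rel V (g u v means {u,v} is an edge). *)
Definition simple_graph (V : finType) (g : rel V) : Prop :=
  symmetric g /\ irreflexive g.

Definition rem_edge (V : finType) (r : rel V) (a b : V) : rel V :=
  [rel u v | r u v && ~~ (((u == a) && (v == b)) || ((u == b) && (v == a)))].

Definition connected_graph (V : finType) (g : rel V) : Prop :=
  forall u v, connect g u v.

Definition two_edge_connected (V : finType) (g : rel V) : Prop :=
  connected_graph g /\ forall a b, g a b -> connected_graph (rem_edge g a b).

Definition acyclic (V : finType) (t : rel V) : Prop :=
  forall (x : V) (p : seq V), path t x p -> uniq (x :: p) -> 2 <= size p ->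
    ~~ t (last x p) x.

Definition spanning_tree (V : finType) (g t : rel V) : Prop :=
  [/\ simple_graph t, subrel t g, connected_graph t & acyclic t].

Definition walk_n (V : finType) (t : rel V) (u v : V) (n : nat) : bool :=
  [exists p : n.-tuple V, path t u p && (last u p == v)].

(* d_t(u,v): the number of edges of a shortest path from u to v in t; in a
   tree this is the number of edges of the unique u-v path.  (Equals #|V| if
   v is unreachable, which does not happen for a spanning tree.) *)
Definition dist (V : finType) (t : rel V) (u v : V) : nat :=
  find (walk_n t u v) (iota 0 #|V|).

(* For the tree edge e = (x0,y0): X = component of x0 in t - e, Y = V \ X. *)
Definition sideX (V : finType) (t : rel V) (x0 y0 : V) : {set V} :=
  [set w | connect (rem_edge t x0 y0) x0 w].

(* Swap edges S_e, written (u,v) with u in X, v in Y. *)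
Definition swap_edges (V : finType) (g t : rel V) (x0 y0 : V) : {set V * V} :=
  [set f | [&& g f.1 f.2, f.1 \in sideX t x0 y0, f.2 \notin sideX t x0 y0
             & f != (x0, y0)]].

Definition stretch (V : finType) (t : rel V) (f h : V * V) : nat :=
  dist t f.1 h.1 + 1 + dist t h.2 f.2.

Definition critical (V : finType) (g t : rel V) (x0 y0 : V) (f h : V * V) : Prop :=
  stretch t f h = \max_(h' in swap_edges g t x0 y0) stretch t f h'.

(* Main.v *)
Require Import Defs.
From mathcomp Require Import all_boot zify.
Set Implicit Arguments. Unset Strict Implicit. Unset Printing Implicit Defensive.


Section Dist.
Variables (V : finType) (t : rel V).
Hypothesis tsym : symmetric t.
Hypothesis tconn : connected_graph t.

Local Notation d := (dist t).

Lemma walk_nP u v n :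
  reflect (exists p : seq V, [/\ path t u p, last u p = v & size p = n]) (walk_n t u v n).
Proof.
apply: (iffP existsP) => [[p /andP[pp /eqP pl]] | [p [pp pl ps]]].
  by exists (val p); rewrite size_tuple.
have sp : size p == n by apply/eqP.
by exists (Tuple sp); rewrite /= pp pl eqxx.
Qed.

Lemma dist_le u v p : path t u p -> last u p = v -> d u v <= size p.
Proof.
move=> pp pl; rewrite /dist; case: (ltnP (size p) #|V|) => H.
  rewrite leqNgt; apply/negP => /(before_find 0); rewrite nth_iota // add0n => Hf.
  have : walk_n t u v (size p) by apply/walk_nP; exists p.
  by rewrite Hf.
by apply: leq_trans (find_size _ _) _; rewrite size_iota.
Qed.

Lemma dist_walk u v : exists p, [/\ path t u p, last u p = v & size p = d u v].
Proof.
have /connectP [p pp ->] := tconn u v.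
case: (shortenP pp) => p' pp' up' _.
have sp : size p' < #|V|.
  have H1 : #|u :: p'| <= #|V| := max_card _.
  by rewrite (card_uniqP up') in H1.
have hw : has (walk_n t u (last u p')) (iota 0 #|V|).
  apply/hasP; exists (size p'); first by rewrite mem_iota.
  by apply/walk_nP; exists p'.
have := nth_find 0 hw; rewrite nth_iota; last by have := hw; rewrite has_find size_iota.
by rewrite add0n => /walk_nP.
Qed.

Lemma dist_tri u v w : d u w <= d u v + d v w.
Proof.
have [p [pp pl ps]] := dist_walk u v.
have [q [qp ql qs]] := dist_walk v w.
rewrite -ps -qs -size_cat; apply: dist_le.
  by rewrite cat_path pp pl qp.
by rewrite last_cat pl.
Qed.

Lemma dist0 u : d u u = 0.
Proof. by apply/eqP; rewrite -leqn0 (dist_le (p:=[::])). Qed.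

Lemma dist_eq0 u v : d u v = 0 -> u = v.
Proof. have [p [_ pl ps]] := dist_walk u v => h0; move: ps; rewrite h0; by case: p pl. Qed.

Lemma dist_adj u v : t u v -> d u v <= 1.
Proof. by move=> h; apply: (dist_le (p:=[:: v])) => //=; rewrite h. Qed.

Lemma dist_sym u v : d u v = d v u.
Proof.
suff H : forall a b, d a b <= d b a by apply/eqP; rewrite eqn_leq !H.
move=> a b; have [p [pp pl ps]] := dist_walk b a.
rewrite -ps -pl -(size_belast b p) -size_rev; apply: dist_le.
  move: pp; rewrite rev_path; apply: sub_path => x y /=; by rewrite tsym.
by case: (p) => //= x q; rewrite rev_cons last_rcons.
Qed.
End Dist.


Fixpoint lcp (T : eqType) (s1 s2 : seq T) : nat :=
  match s1, s2 with
  | x :: s1', y :: s2' => if x == y then (lcp s1' s2').+1 else 0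
  | _, _ => 0
  end.

Section Lcp.
Variable T : eqType.
Implicit Types s : seq T.

Lemma lcp_sym s1 s2 : lcp s1 s2 = lcp s2 s1.
Proof. by elim: s1 s2 => [|x s1 IH] [|y s2] //=; rewrite eq_sym IH. Qed.

Lemma lcp_size s1 s2 : lcp s1 s2 <= size s1.
Proof. by elim: s1 s2 => [|x s1 IH] [|y s2] //=; case: ifP => // _; rewrite ltnS IH. Qed.

Lemma lcp_refl s : lcp s s = size s.
Proof. by elim: s => //= x s ->; rewrite eqxx. Qed.

Lemma lcp_take s1 s2 : take (lcp s1 s2) s1 = take (lcp s1 s2) s2.
Proof.
elim: s1 s2 => [|x s1 IH] [|y s2] //=; case: eqP => [->|] //=.
by rewrite IH.
Qed.

Lemma lcp_rcons s1 s2 x : lcp s1 s2 <= lcp (rcons s1 x) s2 <= (lcp s1 s2).+1.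
Proof.
elim: s1 s2 => [|y s1 IH] [|z s2] //=; first by case: ifP.
by case: ifP => // _; rewrite !ltnS.
Qed.

Lemma lcp_ultra s1 s2 s3 : minn (lcp s1 s2) (lcp s2 s3) <= lcp s1 s3.
Proof.
elim: s1 s2 s3 => [|x s1 IH] [|y s2] [|z s3] //=; rewrite ?minn0 ?min0n //.
case: (x =P y) => [exy|nxy]; case: (y =P z) => [eyz|nyz]; rewrite ?minn0 ?min0n //.
by rewrite exy eyz eqxx minnSS ltnS IH.
Qed.
End Lcp.

Section Tree.
Variables (V : finType) (t : rel V).
Hypothesis tsym : symmetric t.
Hypothesis tirr : irreflexive t.
Hypothesis tconn : connected_graph t.
Hypothesis tacyc : acyclic t.

Local Notation d := (dist t).

Lemma rem_sym u w : symmetric (rem_edge t u w).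
Proof.
move=> a b; rewrite /rem_edge /= tsym.
by case: (a == u); case: (b == w); case: (a == w); case: (b == u).
Qed.

Lemma rem_sub u w : subrel (rem_edge t u w) t.
Proof. by move=> a b /andP[]. Qed.

Lemma bridge u w : t u w -> ~~ connect (rem_edge t u w) u w.
Proof.
move=> tuw; apply/negP => /connectP [p pp pl].
case: (shortenP pp) pl => p' pp' up' _ pl.
have tp' := sub_path (@rem_sub u w) pp'.
case: p' pp' up' tp' pl => [|y [|z q]].
- by move=> _ _ _ /= eu; move: tuw; rewrite eu tirr.
- by move=> /= /andP[/andP[_ H] _] _ _ ey; rewrite -ey !eqxx in H.
- move=> _ up tp pl.
  have := tacyc tp up (isT : 2 <= size [:: y, z & q]).
  by rewrite -pl tsym tuw.
Qed.

Lemma cross u w : t u w -> forall p y, ~~ connect (rem_edge t u w) u y -> path t y p ->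
  connect (rem_edge t u w) u (last y p) ->
  exists p1 p2, [/\ p = p1 ++ u :: p2, last y p1 = w, path t y p1 & path t u p2].
Proof.
move=> tuw; elim=> [|a p IH] y ny /=.
  by move=> _ cy; rewrite cy in ny.
move=> /andP[tya pa] cl.
case ca: (connect (rem_edge t u w) u a).
  have nr : ~~ rem_edge t u w y a.
    apply/negP => r; move/negP: ny; apply; apply: connect_trans ca _.
    by apply: connect1; rewrite rem_sym.
  move: nr; rewrite /rem_edge /= tya /= negbK => /orP[/andP[/eqP yu _]|/andP[/eqP yw /eqP au]].
    by rewrite yu connect0 in ny.
  by exists [::], p; rewrite -au yw.
have [p1 [p2 [ep l1 pp1 pp2]]] := IH a (negbT ca) pa cl.
by exists (a :: p1), p2; rewrite ep /= tya.
Qed.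

Lemma dist_cross u w y y' : t u w -> ~~ connect (rem_edge t u w) u y ->
  connect (rem_edge t u w) u y' -> d y w + 1 + d u y' <= d y y'.
Proof.
move=> tuw ny cy; have [p [pp pl ps]] := dist_walk tconn y y'.
rewrite -pl in cy; have [p1 [p2 [ep l1 pp1 pp2]]] := cross tuw ny pp cy.
have h1 := dist_le pp1 l1.
have h2 : d u y' <= size p2 by apply: dist_le => //; move: pl; rewrite ep last_cat.
rewrite -ps ep size_cat /=; lia.
Qed.

Lemma level r z z' : t z z' -> d r z != d r z'.
Proof.
move=> tzz; have s1 := dist_sym tsym tconn z r; have s2 := dist_sym tsym tconn z' r.
case c: (connect (rem_edge t z z') z r).
  have := dist_cross tzz (bridge tzz) c; rewrite dist0; lia.
have := dist_cross tzz (negbT c) (connect0 _ z); rewrite dist0; lia.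
Qed.


Lemma dist_pos u v : u != v -> 0 < d u v.
Proof. by move=> uv; rewrite lt0n; apply/negP => /eqP /(dist_eq0 tconn) e; rewrite e eqxx in uv. Qed.

Lemma lower_uniq r z w1 w2 : t z w1 -> t z w2 -> (d r w1).+1 = d r z ->
  (d r w2).+1 = d r z -> w1 = w2.
Proof.
move=> t1 t2 e1 e2; apply/eqP/negP => /negP n12.
have sr := dist_sym tsym tconn z r; have sr1 := dist_sym tsym tconn w1 r.
have nrX : ~~ connect (rem_edge t z w1) z r.
  apply/negP => c; have := dist_cross t1 (bridge t1) c; rewrite dist0; lia.
have cw2 : connect (rem_edge t z w1) z w2.
  apply: connect1; rewrite /rem_edge /= t2 eqxx /= [w2 == w1]eq_sym (negbTE n12) /=.
  apply/negP => /andP[/eqP zw1 _]; by move: t1; rewrite -zw1 tirr.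
have := dist_cross t1 nrX cw2.
have : 0 < d z w2 by apply: dist_pos; apply/negP => /eqP zw2; move: t2; rewrite -zw2 tirr.
lia.
Qed.

Lemma level1 r z z' : t z z' -> d r z' = (d r z).+1 \/ d r z = (d r z').+1.
Proof.
move=> tzz; have := level r tzz.
have h1 := dist_tri tconn r z z'; have h2 := dist_tri tconn r z' z.
have a1 := dist_adj tzz; have a2 : d z' z <= 1 by apply: dist_adj; rewrite tsym.
lia.
Qed.

Lemma par_ex r z : z != r -> exists w, t w z && ((d r w).+1 == d r z).
Proof.
move=> zr; have [p [pp pl ps]] := dist_walk tconn r z.
case/lastP: p pp pl ps => [|q y] pp pl ps.
  by rewrite -pl eqxx in zr.
rewrite last_rcons in pl; rewrite -pl in pp ps *; rewrite size_rcons in ps.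
move: pp; rewrite rcons_path => /andP[pq tq].
move ew : (last r q) tq => w tq.
exists w; rewrite tq /=.
have h1 := dist_le pq ew.
have h2 := dist_tri tconn r w y.
have h3 := dist_adj tq.
apply/eqP; lia.
Qed.

Variable r : V.

Definition par z := if [pick w | t w z && ((d r w).+1 == d r z)] is Some w then w else z.

Lemma par_spec z : z != r -> t (par z) z /\ (d r (par z)).+1 = d r z.
Proof.
move=> zr; rewrite /par; case: pickP => [w /andP[tw /eqP e] //|].
by have [w hw] := par_ex zr => /(_ w); rewrite hw.
Qed.

Fixpoint pin n z := if n is n'.+1 then rcons (pin n' (par z)) z else [::].
Definition rpi z := pin (d r z) z.

Lemma size_pi z : size (rpi z) = d r z.
Proof. rewrite /rpi; move: (d r z) => n; elim: n z => //= n IH z; by rewrite size_rcons IH. Qed.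

Lemma pi_r : rpi r = [::].
Proof. by rewrite /rpi dist0. Qed.

Lemma pi_par z : z != r -> rpi z = rcons (rpi (par z)) z.
Proof. move=> zr; have [_ e] := par_spec zr; by rewrite /rpi -e. Qed.

Lemma last_pi z : last r (rpi z) = z.
Proof.
case: (eqVneq z r) => [->|zr]; first by rewrite pi_r.
by rewrite pi_par // last_rcons.
Qed.

Lemma pi_inj z z' : rpi z = rpi z' -> z = z'.
Proof. by move=> e; rewrite -(last_pi z) e last_pi. Qed.

Lemma pi_adj z z' : t z z' -> rpi z' = rcons (rpi z) z' \/ rpi z = rcons (rpi z') z.
Proof.
move=> tzz; case: (level1 r tzz) => e.
  have zr : z' != r by apply/negP => /eqP zr; move: e; rewrite zr dist0.
  have [tp ep] := par_spec zr.
  left; rewrite pi_par //; congr (rcons (rpi _) _).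
  apply: (@lower_uniq r z' (par z') z) => //; by rewrite tsym.
have zr : z != r by apply/negP => /eqP zr; move: e; rewrite zr dist0.
have [tp ep] := par_spec zr.
right; rewrite pi_par //; congr (rcons (rpi _) _).
by apply: (@lower_uniq r z (par z) z') => //; rewrite tsym.
Qed.


Lemma pi_nil z : rpi z = [::] -> z = r.
Proof. by move=> e; rewrite -(last_pi z) e. Qed.

Lemma anc_dist s : forall z c, rpi z = rpi c ++ s -> d c z <= size s.
Proof.
elim/last_ind: s => [|s x IH] z c.
  by rewrite cats0 => /pi_inj ->; rewrite dist0.
rewrite -rcons_cat => e.
have zr : z != r by apply/negP => /eqP zr; move: e; rewrite zr pi_r; case: (rpi c ++ s).
have [tp _] := par_spec zr.
move: e; rewrite pi_par // => /rcons_inj [e1 e2].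
have h1 := IH _ _ e1.
have h2 := dist_tri tconn c (par z) z.
have h3 := dist_adj tp.
rewrite size_rcons; lia.
Qed.

Lemma pi_take n : forall z, d r z <= n -> forall k, exists c, rpi c = take k (rpi z).
Proof.
elim: n => [|n IH] z hz k.
  have zr : z = r by apply: (dist_eq0 tconn); rewrite dist_sym //; apply/eqP; rewrite -leqn0.
  by exists r; rewrite zr pi_r.
case: (eqVneq z r) => [->|zr]; first by exists r; rewrite pi_r.
have [_ ep] := par_spec zr.
case: (leqP k (size (rpi (par z)))) => hk.
  have hp : d r (par z) <= n by rewrite -ltnS ep.
  have [c hc] := IH (par z) hp k.
  by exists c; rewrite hc (pi_par zr) -cats1 takel_cat.
by exists z; rewrite take_oversize // (pi_par zr) size_rcons.
Qed.

Lemma formula_le u v : d u v + 2 * lcp (rpi u) (rpi v) <= d r u + d r v.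
Proof.
set L := lcp (rpi u) (rpi v).
have [c hc] := pi_take (leqnn _) L (z := u).
have eu : rpi u = rpi c ++ drop L (rpi u) by rewrite hc cat_take_drop.
have ev : rpi v = rpi c ++ drop L (rpi v) by rewrite hc /L lcp_take cat_take_drop.
have h1 := anc_dist eu; have h2 := anc_dist ev.
rewrite !size_drop !size_pi in h1 h2.
have l1 : L <= d r u by rewrite -size_pi lcp_size.
have l2 : L <= d r v by rewrite -size_pi /L lcp_sym lcp_size.
have h3 := dist_tri tconn u c v.
have h4 := dist_sym tsym tconn u c.
lia.
Qed.

Lemma formula_ge u v : d r u + d r v <= d u v + 2 * lcp (rpi u) (rpi v).
Proof.
have [p [pp pl ps]] := dist_walk tconn u v.
rewrite -ps; elim: p u pp pl {ps} => [|a p IH] z /=.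
  by move=> _ ->; rewrite lcp_refl size_pi; lia.
move=> /andP[tza pa] pl; have := IH a pa pl.
case: (pi_adj tza) => e.
  have s1 := size_pi a; rewrite e size_rcons size_pi in s1.
  have := lcp_rcons (rpi z) (rpi v) a; rewrite -e; lia.
have s1 := size_pi z; rewrite e size_rcons size_pi in s1.
have := lcp_rcons (rpi a) (rpi v) z; rewrite -e; lia.
Qed.

Lemma formula u v : d u v + 2 * lcp (rpi u) (rpi v) = d r u + d r v.
Proof. by apply/eqP; rewrite eqn_leq formula_le formula_ge. Qed.

End Tree.

Lemma ultra3 (T : eqType) (s1 s2 s3 : seq T) :
  (lcp s1 s2 = lcp s2 s3 /\ lcp s1 s2 <= lcp s1 s3) \/
  (lcp s1 s2 = lcp s1 s3 /\ lcp s1 s2 <= lcp s2 s3) \/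
  (lcp s2 s3 = lcp s1 s3 /\ lcp s2 s3 <= lcp s1 s2).
Proof.
have h1 := lcp_ultra s1 s2 s3.
have h2 := lcp_ultra s2 s3 s1. rewrite [lcp s3 s1]lcp_sym [lcp s2 s1]lcp_sym in h2.
have h3 := lcp_ultra s3 s1 s2. rewrite [lcp s3 s1]lcp_sym [lcp s3 s2]lcp_sym in h3.
lia.
Qed.

Section Key.
Variables (V : finType) (t : rel V).
Hypothesis tsym : symmetric t.
Hypothesis tirr : irreflexive t.
Hypothesis tconn : connected_graph t.
Hypothesis tacyc : acyclic t.
Local Notation d := (dist t).

Lemma Lb1 r u v : lcp (rpi t r u) (rpi t r v) <= d r u.
Proof. by rewrite -size_pi lcp_size. Qed.
Lemma Lb2 r u v : lcp (rpi t r u) (rpi t r v) <= d r v.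
Proof. by rewrite lcp_sym -size_pi lcp_size. Qed.

Lemma key x y a b a1 b1 a2 b2 a3 b3 a4 b4 :
  d a a1 + d b b1 <= d a1 a2 + d b1 b2 ->
  d a a2 + d b b2 <= d a1 a2 + d b1 b2 ->
  d a a3 + d b b3 <= d a1 a2 + d b1 b2 ->
  d a a4 + d b b4 <= d a1 a2 + d b1 b2 ->
  d a1 a3 + d b1 b3 <= d a1 a2 + d b1 b2 ->
  d a1 a4 + d b1 b4 <= d a1 a2 + d b1 b2 ->
  d a2 a3 + d b2 b3 <= d a1 a2 + d b1 b2 ->
  d a2 a4 + d b2 b4 <= d a1 a2 + d b1 b2 ->
  d a3 a4 + d b3 b4 <= d a1 a2 + d b1 b2 ->
  d a a1 + d b b2 <= d a3 a1 + d b3 b2 ->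
  d a1 a1 + d b1 b2 <= d a3 a1 + d b3 b2 ->
  d a2 a1 + d b2 b2 <= d a3 a1 + d b3 b2 ->
  d a4 a1 + d b4 b2 <= d a3 a1 + d b3 b2 ->
  d a a2 + d b b1 <= d a4 a2 + d b4 b1 ->
  d a1 a2 + d b1 b1 <= d a4 a2 + d b4 b1 ->
  d a2 a2 + d b2 b1 <= d a4 a2 + d b4 b1 ->
  d a3 a2 + d b3 b1 <= d a4 a2 + d b4 b1 ->
  d x a + d y b <= d x a1 + d y b1 \/ d x a + d y b <= d x a2 + d y b2 \/ d x a + d y b <= d x a3 + d y b3 \/ d x a + d y b <= d x a4 + d y b4.
Proof.
move=> H0 H1 H2 H3 H4 H5 H6 H7 H8 H9 H10 H11 H12 H13 H14 H15 H16.
have S_a_a1 := dist_sym tsym tconn a1 a.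
have F_a_a1 := formula tsym tirr tconn tacyc x a a1.
have B1_a_a1 := Lb1 x a a1. have B2_a_a1 := Lb2 x a a1.
have S_a_a2 := dist_sym tsym tconn a2 a.
have F_a_a2 := formula tsym tirr tconn tacyc x a a2.
have B1_a_a2 := Lb1 x a a2. have B2_a_a2 := Lb2 x a a2.
have S_a_a3 := dist_sym tsym tconn a3 a.
have F_a_a3 := formula tsym tirr tconn tacyc x a a3.
have B1_a_a3 := Lb1 x a a3. have B2_a_a3 := Lb2 x a a3.
have S_a_a4 := dist_sym tsym tconn a4 a.
have F_a_a4 := formula tsym tirr tconn tacyc x a a4.
have B1_a_a4 := Lb1 x a a4. have B2_a_a4 := Lb2 x a a4.
have S_a1_a2 := dist_sym tsym tconn a2 a1.
have F_a1_a2 := formula tsym tirr tconn tacyc x a1 a2.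
have B1_a1_a2 := Lb1 x a1 a2. have B2_a1_a2 := Lb2 x a1 a2.
have S_a1_a3 := dist_sym tsym tconn a3 a1.
have F_a1_a3 := formula tsym tirr tconn tacyc x a1 a3.
have B1_a1_a3 := Lb1 x a1 a3. have B2_a1_a3 := Lb2 x a1 a3.
have S_a1_a4 := dist_sym tsym tconn a4 a1.
have F_a1_a4 := formula tsym tirr tconn tacyc x a1 a4.
have B1_a1_a4 := Lb1 x a1 a4. have B2_a1_a4 := Lb2 x a1 a4.
have S_a2_a3 := dist_sym tsym tconn a3 a2.
have F_a2_a3 := formula tsym tirr tconn tacyc x a2 a3.
have B1_a2_a3 := Lb1 x a2 a3. have B2_a2_a3 := Lb2 x a2 a3.
have S_a2_a4 := dist_sym tsym tconn a4 a2.
have F_a2_a4 := formula tsym tirr tconn tacyc x a2 a4.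
have B1_a2_a4 := Lb1 x a2 a4. have B2_a2_a4 := Lb2 x a2 a4.
have S_a3_a4 := dist_sym tsym tconn a4 a3.
have F_a3_a4 := formula tsym tirr tconn tacyc x a3 a4.
have B1_a3_a4 := Lb1 x a3 a4. have B2_a3_a4 := Lb2 x a3 a4.
have Z_a := dist0 t a.
have Z_a1 := dist0 t a1.
have Z_a2 := dist0 t a2.
have Z_a3 := dist0 t a3.
have Z_a4 := dist0 t a4.
have S_b_b1 := dist_sym tsym tconn b1 b.
have F_b_b1 := formula tsym tirr tconn tacyc y b b1.
have B1_b_b1 := Lb1 y b b1. have B2_b_b1 := Lb2 y b b1.
have S_b_b2 := dist_sym tsym tconn b2 b.
have F_b_b2 := formula tsym tirr tconn tacyc y b b2.
have B1_b_b2 := Lb1 y b b2. have B2_b_b2 := Lb2 y b b2.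
have S_b_b3 := dist_sym tsym tconn b3 b.
have F_b_b3 := formula tsym tirr tconn tacyc y b b3.
have B1_b_b3 := Lb1 y b b3. have B2_b_b3 := Lb2 y b b3.
have S_b_b4 := dist_sym tsym tconn b4 b.
have F_b_b4 := formula tsym tirr tconn tacyc y b b4.
have B1_b_b4 := Lb1 y b b4. have B2_b_b4 := Lb2 y b b4.
have S_b1_b2 := dist_sym tsym tconn b2 b1.
have F_b1_b2 := formula tsym tirr tconn tacyc y b1 b2.
have B1_b1_b2 := Lb1 y b1 b2. have B2_b1_b2 := Lb2 y b1 b2.
have S_b1_b3 := dist_sym tsym tconn b3 b1.
have F_b1_b3 := formula tsym tirr tconn tacyc y b1 b3.
have B1_b1_b3 := Lb1 y b1 b3. have B2_b1_b3 := Lb2 y b1 b3.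
have S_b1_b4 := dist_sym tsym tconn b4 b1.
have F_b1_b4 := formula tsym tirr tconn tacyc y b1 b4.
have B1_b1_b4 := Lb1 y b1 b4. have B2_b1_b4 := Lb2 y b1 b4.
have S_b2_b3 := dist_sym tsym tconn b3 b2.
have F_b2_b3 := formula tsym tirr tconn tacyc y b2 b3.
have B1_b2_b3 := Lb1 y b2 b3. have B2_b2_b3 := Lb2 y b2 b3.
have S_b2_b4 := dist_sym tsym tconn b4 b2.
have F_b2_b4 := formula tsym tirr tconn tacyc y b2 b4.
have B1_b2_b4 := Lb1 y b2 b4. have B2_b2_b4 := Lb2 y b2 b4.
have S_b3_b4 := dist_sym tsym tconn b4 b3.
have F_b3_b4 := formula tsym tirr tconn tacyc y b3 b4.
have B1_b3_b4 := Lb1 y b3 b4. have B2_b3_b4 := Lb2 y b3 b4.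
have Z_b := dist0 t b.
have Z_b1 := dist0 t b1.
have Z_b2 := dist0 t b2.
have Z_b3 := dist0 t b3.
have Z_b4 := dist0 t b4.
case: (ultra3 (rpi t x a) (rpi t x a1) (rpi t x a2)) => [[E0 F0]|[[E0 F0]|[E0 F0]]].
-
  case: (ultra3 (rpi t y b) (rpi t y b1) (rpi t y b2)) => [[E1 F1]|[[E1 F1]|[E1 F1]]].
  -
    lia.
  -
    lia.
  -
    case: (ultra3 (rpi t x a1) (rpi t x a2) (rpi t x a3)) => [[E2 F2]|[[E2 F2]|[E2 F2]]].
    -
      lia.
    -
      case: (ultra3 (rpi t y b1) (rpi t y b2) (rpi t y b3)) => [[E3 F3]|[[E3 F3]|[E3 F3]]].
      -
        lia.
      -
        lia.
      -
        lia.
    -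
      lia.
-
  case: (ultra3 (rpi t y b) (rpi t y b1) (rpi t y b2)) => [[E4 F4]|[[E4 F4]|[E4 F4]]].
  -
    lia.
  -
    lia.
  -
    lia.
-
  case: (ultra3 (rpi t y b) (rpi t y b1) (rpi t y b2)) => [[E5 F5]|[[E5 F5]|[E5 F5]]].
  -
    case: (ultra3 (rpi t x a1) (rpi t x a2) (rpi t x a4)) => [[E6 F6]|[[E6 F6]|[E6 F6]]].
    -
      case: (ultra3 (rpi t y b1) (rpi t y b2) (rpi t y b4)) => [[E7 F7]|[[E7 F7]|[E7 F7]]].
      -
        lia.
      -
        lia.
      -
        lia.
    -
      lia.
    -
      lia.
  -
    lia.
  -
    lia.
Qed.
End Key.


Lemma exmax (T : finType) (P : pred T) (F : T -> nat) (i0 : T) :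
  P i0 -> exists2 i, P i & forall j, P j -> F j <= F i.
Proof. by move=> P0; case: (arg_maxnP F P0) => i Pi Hi; exists i. Qed.

Theorem theorem1 (V : finType) (g t : rel V) :
  simple_graph g -> two_edge_connected g -> spanning_tree g t ->
  forall x0 y0 : V, t x0 y0 ->
  exists C : {set V * V},
    [/\ C \subset swap_edges g t x0 y0, #|C| <= 6 &
        forall f, f \in swap_edges g t x0 y0 ->
          exists2 h, h \in C & critical g t x0 y0 f h].
Proof.
move=> _ _ [[tsym tirr] _ tconn tacyc] x0 y0 _.
set S := swap_edges g t x0 y0.
case: (set_0Vmem S) => [S0 | [s0 s0S]].
  exists set0; split; [by rewrite sub0set | by rewrite cards0 | by move=> f; rewrite S0 inE].
set DD := fun p q : V * V => dist t p.1 q.1 + dist t p.2 q.2.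
have [[h1 h2] /andP[/= h1S h2S] Hm] :=
  @exmax _ (fun p : (V * V) * (V * V) => (p.1 \in S) && (p.2 \in S))
    (fun p => DD p.1 p.2) (s0, s0) (introT andP (conj s0S s0S)).
have HP : forall u w, u \in S -> w \in S -> DD u w <= DD h1 h2.
  by move=> u w uS wS; apply: (Hm (u, w)); rewrite /= uS wS.
have [h3 h3S H3] := @exmax _ (fun h => h \in S) (fun h => DD h (h1.1, h2.2)) s0 s0S.
have [h4 h4S H4] := @exmax _ (fun h => h \in S) (fun h => DD h (h2.1, h1.2)) s0 s0S.
exists [set x in [:: h1; h2; h3; h4]]; split.
- apply/subsetP => z; rewrite in_set !in_cons in_nil orbF.
  by case/or4P => /eqP ->.
- by rewrite cardsE; apply: leq_trans (card_size _) _.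
move=> f fS.
have S0 : 0 < #|S| by apply/card_gt0P; exists s0.
have [hm hmS em] := eq_bigmax_cond (fun h => stretch t f h) S0.
have Hc : forall h, h \in S -> stretch t f hm <= stretch t f h -> critical g t x0 y0 f h.
  move=> h hS le; rewrite /critical em; apply/eqP; rewrite eqn_leq le andbT -em.
  exact: (leq_bigmax_cond (F := fun h => stretch t f h)).
have K := key tsym tirr tconn tacyc f.1 f.2
  (HP _ _ hmS h1S) (HP _ _ hmS h2S) (HP _ _ hmS h3S) (HP _ _ hmS h4S)
  (HP _ _ h1S h3S) (HP _ _ h1S h4S) (HP _ _ h2S h3S) (HP _ _ h2S h4S) (HP _ _ h3S h4S)
  (H3 _ hmS) (H3 _ h1S) (H3 _ h2S) (H3 _ h4S)
  (H4 _ hmS) (H4 _ h1S) (H4 _ h2S) (H4 _ h3S).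
have E : forall h, stretch t f h = dist t f.1 h.1 + dist t f.2 h.2 + 1.
  by move=> h; rewrite /stretch (dist_sym tsym tconn h.2 f.2) addnAC.
case: K => [K|[K|[K|K]]].
- by exists h1; [rewrite !inE eqxx | apply: Hc; rewrite // !E leq_add2r].
- by exists h2; [rewrite !inE eqxx ?orbT | apply: Hc; rewrite // !E leq_add2r].
- by exists h3; [rewrite !inE eqxx ?orbT | apply: Hc; rewrite // !E leq_add2r].
- by exists h4; [rewrite !inE eqxx ?orbT | apply: Hc; rewrite // !E leq_add2r].
Qed.
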